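(* Let $P\subset\mathbb{R}^2\times\{0\}\subset\mathbb{R}^3$ be a Reuleaux polygon of width $1$ with vertices $p_1,\dots,p_n$, so that $P=\bigcap_{i=1}^nB(p_i,1)\cap\{z=0\}$. Let $\bar P=\bigcap_{i=1}^nB(p_i,1)\subset\mathbb{R}^3$ and $P^+=\bar P\cap\{z\ge 0\}$. Then (i) the diameter of $P^+$ is $1$; and (ii) for every point $x\in\partial P^+\cap\{z>0\}$ there is a point $y$ on the boundary of the Reuleaux polygon $P$ (in the plane $z=0$) with $d(x,y)=1$.
   Context: $B(p,1)$ is the closed unit ball in $\mathbb{R}^3$ centered at $p$; $z$ denotes the third coordinate; $d$ is Euclidean distance. A Reuleaux polygon of width $1$ is a planar convex set of constant width $1$ of the form $\bigcap_{i=1}^n D(p_i,1)$ (closed unit disks), where $n\ge 3$ is odd and the points $p_1,\dots,p_n$ are exactly its vertices (corner points of its boundary); its boundary consists of unit-radius circular arcs centered at the vertices. *)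

(* Defs.v *)
From Stdlib Require Import Reals Lra Lia.
Open Scope R_scope.

Definition R2 : Type := (R * R)%type.
Definition R3 : Type := (R * R * R)%type.

Definition dot2 (a b : R2) : R := fst a * fst b + snd a * snd b.
Definition sub2 (a b : R2) : R2 := (fst a - fst b, snd a - snd b).
Definition dist2 (a b : R2) : R := sqrt (dot2 (sub2 a b) (sub2 a b)).

Definition dist3 (a b : R3) : R :=
  let '(a1, a2, a3) := a in let '(b1, b2, b3) := b in
  sqrt ((a1 - b1)^2 + (a2 - b2)^2 + (a3 - b3)^2).

Definition zc (x : R3) : R := snd x.

Definition emb (a : R2) : R3 := (fst a, snd a, 0).

Definition boundary2 (S : R2 -> Prop) (x : R2) : Prop :=
  forall eps, 0 < eps ->
    (exists y, S y /\ dist2 x y < eps) /\ (exists y, ~ S y /\ dist2 x y < eps).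
Definition boundary3 (S : R3 -> Prop) (x : R3) : Prop :=
  forall eps, 0 < eps ->
    (exists y, S y /\ dist3 x y < eps) /\ (exists y, ~ S y /\ dist3 x y < eps).

Definition convex2 (S : R2 -> Prop) : Prop :=
  forall x y t, S x -> S y -> 0 <= t <= 1 ->
    S (t * fst x + (1 - t) * fst y, t * snd x + (1 - t) * snd y).

Definition const_width2 (S : R2 -> Prop) (w : R) : Prop :=
  forall u : R2, dot2 u u = 1 ->
    is_lub (fun r => exists x y, S x /\ S y /\ r = dot2 (sub2 x y) u) w.

(* corner point of the boundary: a boundary point admitting two distinct
   outer unit normals of supporting lines *)
Definition is_vertex2 (S : R2 -> Prop) (x : R2) : Prop :=
  S x /\ boundary2 S x /\
  exists u v : R2, dot2 u u = 1 /\ dot2 v v = 1 /\ u <> v /\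
    (forall y, S y -> dot2 (sub2 y x) u <= 0) /\
    (forall y, S y -> dot2 (sub2 y x) v <= 0).

Definition disk_inter (n : nat) (p : nat -> R2) (x : R2) : Prop :=
  forall i, (i < n)%nat -> dist2 x (p i) <= 1.

Definition reuleaux_polygon (n : nat) (p : nat -> R2) : Prop :=
  (3 <= n)%nat /\ Nat.Odd n /\
  (forall i j, (i < n)%nat -> (j < n)%nat -> p i = p j -> i = j) /\
  convex2 (disk_inter n p) /\
  const_width2 (disk_inter n p) 1 /\
  (forall x, is_vertex2 (disk_inter n p) x <-> exists i, (i < n)%nat /\ x = p i).

Definition Pbar (n : nat) (p : nat -> R2) (x : R3) : Prop :=
  forall i, (i < n)%nat -> dist3 x (emb (p i)) <= 1.

Definition Pplus_set (n : nat) (p : nat -> R2) (x : R3) : Prop :=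
  Pbar n p x /\ 0 <= zc x.

Definition diameter_is (S : R3 -> Prop) (d : R) : Prop :=
  is_lub (fun r => exists x y, S x /\ S y /\ r = dist3 x y) d.

(* Main.v *)
Require Import Defs.
From Stdlib Require Import Reals.
From Stdlib Require Import Reals Lra Lia Psatz Classical.
Open Scope R_scope.

Lemma sqrt_tri3 u1 u2 u3 v1 v2 v3 :
  sqrt ((u1+v1)^2+(u2+v2)^2+(u3+v3)^2) <=
  sqrt (u1^2+u2^2+u3^2) + sqrt (v1^2+v2^2+v3^2).
Proof.
  set (nu := sqrt (u1^2+u2^2+u3^2)).
  set (nv := sqrt (v1^2+v2^2+v3^2)).
  assert (Hu : 0 <= u1^2+u2^2+u3^2) by nra.
  assert (Hv : 0 <= v1^2+v2^2+v3^2) by nra.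
  assert (E1 : nu * nu = u1^2+u2^2+u3^2) by (apply sqrt_sqrt; lra).
  assert (E2 : nv * nv = v1^2+v2^2+v3^2) by (apply sqrt_sqrt; lra).
  assert (P1 : 0 <= nu) by apply sqrt_pos.
  assert (P2 : 0 <= nv) by apply sqrt_pos.
  assert (CS : u1*v1+u2*v2+u3*v3 <= nu * nv).
  { assert (H : (u1*v1+u2*v2+u3*v3)^2 <= (nu*nv)^2).
    { replace ((nu*nv)^2) with ((nu*nu)*(nv*nv)) by ring. rewrite E1, E2.
      assert (L : (u1^2+u2^2+u3^2)*(v1^2+v2^2+v3^2) - (u1*v1+u2*v2+u3*v3)^2 = (u1*v2-u2*v1)^2 + (u1*v3-u3*v1)^2 + (u2*v3-u3*v2)^2) by ring.
      assert (0 <= (u1*v2-u2*v1)^2 + (u1*v3-u3*v1)^2 + (u2*v3-u3*v2)^2) by (apply Rplus_le_le_0_compat; [apply Rplus_le_le_0_compat|]; apply pow2_ge_0).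
      lra. }
    assert (0 <= nu*nv) by nra. nra. }
  rewrite <- (sqrt_pow2 (nu + nv)) by lra.
  apply sqrt_le_1_alt. nra.
Qed.

Lemma dist3_eq a1 a2 a3 b1 b2 b3 : dist3 (a1,a2,a3) (b1,b2,b3) =
  sqrt ((a1 - b1)^2 + (a2 - b2)^2 + (a3 - b3)^2).
Proof. reflexivity. Qed.

Lemma dist3_tri a b c : dist3 a c <= dist3 a b + dist3 b c.
Proof.
  destruct a as [[a1 a2] a3], b as [[b1 b2] b3], c as [[c1 c2] c3]; simpl.
  replace (a1 - c1) with ((a1-b1)+(b1-c1)) by ring.
  replace (a2 - c2) with ((a2-b2)+(b2-c2)) by ring.
  replace (a3 - c3) with ((a3-b3)+(b3-c3)) by ring.
  apply sqrt_tri3.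
Qed.

Lemma dist3_sym a b : dist3 a b = dist3 b a.
Proof.
  destruct a as [[a1 a2] a3], b as [[b1 b2] b3]; simpl. f_equal; ring.
Qed.

Lemma dist3_z a b : Rabs (zc a - zc b) <= dist3 a b.
Proof.
  destruct a as [[a1 a2] a3], b as [[b1 b2] b3]; unfold zc; simpl.
  rewrite <- sqrt_Rsqr_abs. apply sqrt_le_1_alt. unfold Rsqr. pose proof (pow2_ge_0 (a1-b1)). pose proof (pow2_ge_0 (a2-b2)). simpl. lra.
Qed.

Lemma dist3_emb a b : dist3 (emb a) (emb b) = dist2 a b.
Proof.
  destruct a as [a1 a2], b as [b1 b2]; unfold dist2, dot2, sub2, emb; simpl.
  f_equal; ring.
Qed.

Lemma diam2 n p c d : const_width2 (disk_inter n p) 1 ->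
  disk_inter n p c -> disk_inter n p d ->
  (fst c - fst d)^2 + (snd c - snd d)^2 <= 1.
Proof.
  intros CW Hc Hd.
  set (Q := (fst c - fst d)^2 + (snd c - snd d)^2).
  assert (HQ : 0 <= Q) by (unfold Q; apply Rplus_le_le_0_compat; apply pow2_ge_0).
  destruct (Req_dec Q 0) as [E|NE]; [lra|].
  set (s := sqrt Q).
  assert (Hs : 0 < s) by (apply sqrt_lt_R0; lra).
  assert (Ess : s * s = Q) by (apply sqrt_sqrt; lra).
  set (u := ((fst c - fst d)/s, (snd c - snd d)/s)).
  assert (Hu : dot2 u u = 1).
  { unfold dot2, u; simpl.
    replace ((fst c - fst d) / s * ((fst c - fst d) / s) + (snd c - snd d) / s * ((snd c - snd d) / s))
      with (Q / (s*s)) by (unfold Q; field; lra).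
    rewrite Ess. field. lra. }
  destruct (CW u Hu) as [UB _].
  assert (H : dot2 (sub2 c d) u <= 1) by (apply UB; exists c, d; auto).
  unfold dot2, sub2, u in H; simpl in H.
  assert (H2 : ((fst c - fst d) * ((fst c - fst d) / s) +
       (snd c - snd d) * ((snd c - snd d) / s)) = s).
  { replace ((fst c - fst d) * ((fst c - fst d) / s) + (snd c - snd d) * ((snd c - snd d) / s))
      with (Q / s) by (unfold Q; field; lra).
    rewrite <- Ess. field. lra. }
  rewrite H2 in H. nra.
Qed.

Lemma core n p a b r : const_width2 (disk_inter n p) 1 -> 0 <= r <= 1 ->
  (forall i, (i < n)%nat -> (fst a - fst (p i))^2 + (snd a - snd (p i))^2 <= r^2) ->
  disk_inter n p b ->
  (fst a - fst b)^2 + (snd a - snd b)^2 <= r^2.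
Proof.
  intros CW Hr Ha Hb.
  set (Q := (fst a - fst b)^2 + (snd a - snd b)^2).
  assert (HQ : 0 <= Q) by (unfold Q; apply Rplus_le_le_0_compat; apply pow2_ge_0).
  destruct (Req_dec Q 0) as [E|NE]; [nra|].
  set (s := sqrt Q).
  assert (Hs : 0 < s) by (apply sqrt_lt_R0; lra).
  assert (Ess : s * s = Q) by (apply sqrt_sqrt; lra).
  set (t := (1 - r) / s).
  assert (Ht : 0 <= t) by (unfold t; apply Rmult_le_pos; [lra|left; apply Rinv_0_lt_compat; lra]).
  assert (Hts : t * s = 1 - r) by (unfold t; field; lra).
  set (z := (fst a + t * (fst a - fst b), snd a + t * (snd a - snd b))).
  assert (Hz : disk_inter n p z).
  { intros i Hi. unfold dist2, dot2, sub2, z; simpl.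
    rewrite <- sqrt_1. apply sqrt_le_1_alt.
    set (A1 := fst a - fst (p i)). set (A2 := snd a - snd (p i)).
    set (D1 := fst a - fst b). set (D2 := snd a - snd b).
    specialize (Ha i Hi). fold A1 A2 in Ha.
    assert (HQ' : D1^2 + D2^2 = Q) by reflexivity.
    replace (fst a + t * D1 - fst (p i)) with (A1 + t*D1) by (unfold A1; ring).
    replace (snd a + t * D2 - snd (p i)) with (A2 + t*D2) by (unfold A2; ring).
    assert (CS : (A1*D1 + A2*D2)^2 <= (A1^2+A2^2) * Q) by (rewrite <- HQ';
      assert (Lg : (A1^2+A2^2)*(D1^2+D2^2) - (A1*D1+A2*D2)^2 = (A1*D2-A2*D1)^2) by ring;
      pose proof (pow2_ge_0 (A1*D2-A2*D1)); lra).
    assert (CS2 : t*(A1*D1 + A2*D2) <= r * (1 - r)).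
    { assert (H1 : (t*(A1*D1 + A2*D2))^2 <= (r*(1-r))^2).
      { replace ((t * (A1 * D1 + A2 * D2))^2) with (t^2 * (A1 * D1 + A2 * D2)^2) by ring.
        replace ((r*(1-r))^2) with (r^2 * (t*s)^2) by (rewrite Hts; ring).
        replace ((t*s)^2) with (t^2 * Q) by (rewrite <- Ess; ring).
        assert (T2 : 0 <= t^2) by (apply pow2_ge_0).
        assert (X1 : (A1 * D1 + A2 * D2)^2 <= r^2 * Q).
        { apply Rle_trans with ((A1^2+A2^2)*Q); [exact CS|]. apply Rmult_le_compat_r; lra. }
        replace (r^2 * (t^2 * Q)) with (t^2 * (r^2 * Q)) by ring.
        apply Rmult_le_compat_l; lra. }
      assert (0 <= r*(1-r)) by nra. nra. }
    assert (tQ : t^2 * Q = (1-r)^2) by (rewrite <- Hts, <- Ess; ring).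
    rewrite <- HQ' in tQ. nra. }
  pose proof (diam2 n p z b CW Hz Hb) as Hd. unfold z in Hd; cbn [fst snd] in Hd.
  assert (E0 : (fst a + t * (fst a - fst b) - fst b) ^ 2 + (snd a + t * (snd a - snd b) - snd b) ^ 2 = (1+t)^2 * Q) by (unfold Q; ring). rewrite E0 in Hd.


  assert (E : (1+t)^2 * Q = (s + (1-r))^2) by (rewrite <- Hts, <- Ess; ring).
  rewrite E in Hd.
  assert (s + (1 - r) <= 1).
  { destruct (Rle_dec (s + (1-r)) 1); auto. nra. }
  assert (s <= r) by lra.
  replace Q with (s*s) by exact Ess. nra.
Qed.

Lemma pbar_sq n p x i : Pbar n p x -> (i < n)%nat ->
  (fst (fst x) - fst (p i))^2 + (snd (fst x) - snd (p i))^2 + (zc x)^2 <= 1.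
Proof.
  intros H Hi. specialize (H i Hi).
  destruct x as [[x1 x2] x3]. unfold emb, zc in *. rewrite dist3_eq in H. cbn [fst snd] in *.
  replace ((x1 - fst (p i)) ^ 2 + (x2 - snd (p i)) ^ 2 + (x3 - 0) ^ 2) with
   ((x1 - fst (p i)) ^ 2 + (x2 - snd (p i)) ^ 2 + x3 ^ 2) in H by ring.
  set (E := (x1 - fst (p i)) ^ 2 + (x2 - snd (p i)) ^ 2 + x3 ^ 2) in *.
  destruct (Rle_dec E 1) as [|N]; auto. exfalso.
  assert (1 < sqrt E) by (rewrite <- sqrt_1; apply sqrt_lt_1_alt; lra). lra.
Qed.

Lemma dist2_eq a1 a2 b : dist2 (a1,a2) b = sqrt ((a1 - fst b)^2 + (a2 - snd b)^2).
Proof. unfold dist2, dot2, sub2; cbn [fst snd]. f_equal; ring. Qed.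

Lemma upper n p x y : (0 < n)%nat -> const_width2 (disk_inter n p) 1 ->
  Pplus_set n p x -> Pplus_set n p y -> zc y <= zc x -> dist3 x y <= 1.
Proof.
  intros Hn CW [Hx Hx0] [Hy Hy0] Hle.
  pose proof (fun i Hi => pbar_sq n p x i Hx Hi) as Px.
  pose proof (fun i Hi => pbar_sq n p y i Hy Hi) as Py.
  destruct x as [[x1 x2] x3], y as [[y1 y2] y3]; unfold zc in *; cbn [fst snd] in *.
  assert (Hb : disk_inter n p (y1, y2)).
  { intros i Hi. specialize (Py i Hi). rewrite dist2_eq. rewrite <- sqrt_1. apply sqrt_le_1_alt.
    pose proof (pow2_ge_0 y3). lra. }
  assert (Hx3 : x3^2 <= 1).
  { specialize (Px 0%nat Hn). pose proof (pow2_ge_0 (x1 - fst (p 0%nat))).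
    pose proof (pow2_ge_0 (x2 - snd (p 0%nat))). lra. }
  set (r := sqrt (1 - x3^2)).
  assert (Hr2 : r * r = 1 - x3^2) by (apply sqrt_sqrt; lra).
  assert (Hr0 : 0 <= r) by apply sqrt_pos.
  assert (Hr1 : r <= 1) by (unfold r; apply Rle_trans with (sqrt 1); [apply sqrt_le_1_alt; pose proof (pow2_ge_0 x3); lra | rewrite sqrt_1; lra]).
  assert (HC := core n p (x1,x2) (y1,y2) r CW (conj Hr0 Hr1)).
  cbn [fst snd] in HC.
  assert (HQ : (x1 - y1)^2 + (x2 - y2)^2 <= r^2).
  { apply HC; auto. intros i Hi. specialize (Px i Hi). replace (r^2) with (r*r) by ring. lra. }
  rewrite dist3_eq. rewrite <- sqrt_1. apply sqrt_le_1_alt.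
  replace (r^2) with (r*r) in HQ by ring. nra.
Qed.

Fixpoint mx (f : nat -> R) (k : nat) : R :=
  match k with O => 0 | S k' => Rmax (mx f k') (f k') end.

Lemma mx_lt f k : (forall i, (i < k)%nat -> f i < 1) -> mx f k < 1.
Proof.
  induction k; intros H; simpl; [lra|].
  apply Rmax_lub_lt; [apply IHk; intros; apply H; lia | apply H; lia].
Qed.

Lemma mx_ge f k i : (i < k)%nat -> f i <= mx f k.
Proof.
  induction k; intros H; [lia|]. simpl.
  destruct (Nat.eq_dec i k) as [->|N].
  - apply Rmax_r.
  - eapply Rle_trans; [apply IHk; lia | apply Rmax_l].
Qed.

Lemma emb_in n p x : disk_inter n p x -> Pplus_set n p (emb x).
Proof.
  intros H. split.
  - intros i Hi. rewrite dist3_emb. apply H; auto.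
  - unfold zc, emb; simpl; lra.
Qed.

Theorem lemma1 (n : nat) (p : nat -> R2) :
  reuleaux_polygon n p ->
  diameter_is (Pplus_set n p) 1 /\
  (forall x : R3, boundary3 (Pplus_set n p) x -> 0 < zc x ->
     exists y : R2, boundary2 (disk_inter n p) y /\ dist3 x (emb y) = 1).
Proof.
  intros (H3 & Hodd & Hinj & Hcv & CW & Hv).
  assert (Hn : (0 < n)%nat) by lia.
  split.
  - split.
    + intros r (x & y & Hx & Hy & ->).
      destruct (Rle_dec (zc y) (zc x)).
      * apply upper with n p; auto.
      * rewrite dist3_sym. apply upper with n p; auto; lra.
    + intros b Hb.
      assert (Hu : dot2 (1,0) (1,0) = 1) by (unfold dot2; simpl; ring).
      destruct (CW _ Hu) as [_ L]. apply L.
      intros r (x & y & Hx & Hy & ->).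
      apply Rle_trans with (dist2 x y).
      * destruct x as [x1 x2], y as [y1 y2]. rewrite dist2_eq. unfold dot2, sub2; cbn [fst snd].
        apply Rle_trans with (Rabs (x1 - y1)); [apply Rle_trans with (x1 - y1); [lra|apply RRle_abs]|].
        rewrite <- sqrt_Rsqr_abs. apply sqrt_le_1_alt. unfold Rsqr.
        pose proof (pow2_ge_0 (x2 - y2)). simpl. lra.
      * rewrite <- dist3_emb. apply Hb. exists (emb x), (emb y). split; [apply emb_in; exact Hx|split; [apply emb_in; exact Hy|reflexivity]].
  - intros x Hbd Hz.
    destruct (classic (exists i, (i < n)%nat /\ dist3 x (emb (p i)) = 1)) as [(i & Hi & E)|NE].
    + exists (p i). split; auto.
      assert (V : is_vertex2 (disk_inter n p) (p i)) by (apply Hv; eauto).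
      destruct V as (_ & B & _). exact B.
    + exfalso.
      destruct (classic (exists i, (i < n)%nat /\ 1 < dist3 x (emb (p i)))) as [(i & Hi & G)|NG].
      * destruct (Hbd (dist3 x (emb (p i)) - 1) ltac:(lra)) as [(y & [Py _] & Dy) _].
        pose proof (Py i Hi).
        pose proof (dist3_tri x y (emb (p i))). lra.
      * set (f := fun i => dist3 x (emb (p i))).
        assert (Hlt : forall i, (i < n)%nat -> f i < 1).
        { intros i Hi. unfold f. destruct (Rtotal_order (dist3 x (emb (p i))) 1) as [?|[?|?]]; auto.
          - exfalso; apply NE; eauto.
          - exfalso; apply NG; eauto. }
        pose proof (mx_lt f n Hlt) as M.
        set (eps := Rmin (zc x) (1 - mx f n)).
        assert (Heps : 0 < eps) by (unfold eps; apply Rmin_glb_lt; lra).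
        destruct (Hbd eps Heps) as [_ (y & Ny & Dy)].
        apply Ny. split.
        -- intros i Hi. pose proof (mx_ge f n i Hi) as G.
           pose proof (dist3_tri y x (emb (p i))) as T. rewrite (dist3_sym y x) in T.
           pose proof (Rmin_r (zc x) (1 - mx f n)) as R1. fold eps in R1. unfold f in *. lra.
        -- pose proof (dist3_z x y) as Z. pose proof (Rmin_l (zc x) (1 - mx f n)) as R1. fold eps in R1.
           pose proof (Rle_abs (zc x - zc y)) as Z2. pose proof (Rle_abs (-(zc x - zc y))) as Z3. rewrite Rabs_Ropp in Z3. lra.
Qed.
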